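(* Let $g>0$ and $\chi>0$ be constants, and let $h(t,x)>0$, $u(t,x)$ be smooth solutions of $$h_t+(hu)_x=0,\qquad (hu)_t+\Big(hu^2+g\frac{h^2}{2}-\chi\ddot\tau\Big)_x=0,$$ where $\tau=1/h$ and for any function $f(t,x)$, $\dot f=f_t+uf_x$ (so $\ddot\tau$ is the second such material derivative of $\tau$). Then, with $q=hu$, the energy conservation law $$\left(h\Big(\frac{u^2}{2}+g\frac{h}{2}+\frac{\chi\dot\tau^2}{2}\Big)\right)_t+\left(q\Big(\frac{u^2}{2}+g\frac{h}{2}+\frac{\chi\dot\tau^2}{2}\Big)+\Big(g\frac{h^2}{2}-\chi\ddot\tau\Big)u\right)_x=0$$ holds.
   Context: This is the ''simplified geometrical Green–Naghdi'' system for section-averaged depth $h$ and Favre-averaged velocity $u$ in a prismatic channel, with $\chi$ a positive geometric dispersion coefficient determined by the channel cross-section. *)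

(* Defs.v *)
From Stdlib Require Import Reals List.
From Coquelicot Require Import Coquelicot.
Open Scope R_scope.

Definition pt (f : R -> R -> R) : R -> R -> R :=
  fun t x => Derive (fun s => f s x) t.
Definition px (f : R -> R -> R) : R -> R -> R :=
  fun t x => Derive (fun y => f t y) x.

Fixpoint iter_partial (l : list bool) (f : R -> R -> R) : R -> R -> R :=
  match l with
  | nil => f
  | b :: l' => if b then pt (iter_partial l' f) else px (iter_partial l' f)
  end.

Definition smooth2 (f : R -> R -> R) : Prop :=
  forall l : list bool,
    (forall t x, ex_derive (fun s => iter_partial l f s x) t /\
                 ex_derive (fun y => iter_partial l f t y) x) /\
    (forall t x, continuity_2d_pt (iter_partial l f) t x).

Definition mat (u f : R -> R -> R) : R -> R -> R :=
  fun t x => pt f t x + u t x * px f t x.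

(* Main.v *)
Require Import Defs.
From Stdlib Require Import Reals List FunctionalExtensionality Lra.
From Coquelicot Require Import Coquelicot.
Open Scope R_scope.
Import ListNotations.


Ltac exl S l := first [exact (proj1 (proj1 (S l) _ _)) | exact (proj2 (proj1 (S l) _ _))].
Ltac exd h u Sh Su :=
  lazymatch goal with
  | |- ex_derive (fun _ => h _ _) _ => exl Sh (@nil bool)
  | |- ex_derive (fun _ => u _ _) _ => exl Su (@nil bool)
  | |- ex_derive (fun _ => pt h _ _) _ => exl Sh [true]
  | |- ex_derive (fun _ => px h _ _) _ => exl Sh [false]
  | |- ex_derive (fun _ => pt u _ _) _ => exl Su [true]
  | |- ex_derive (fun _ => px u _ _) _ => exl Su [false]
  | |- ex_derive (fun _ => pt (px u) _ _) _ => exl Su [true;false]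
  | |- ex_derive (fun _ => px (px u) _ _) _ => exl Su [false;false]
  end.
Ltac nz Hpos := repeat apply Rmult_integral_contrapositive_currified;
  first [exact R1_neq_R0 | apply Rgt_not_eq; apply Hpos].
Ltac side h u Sh Su Hpos := repeat match goal with |- _ /\ _ => split end;
  lazymatch goal with
  | |- True => exact I
  | |- ex_derive _ _ => exd h u Sh Su
  | |- _ <> 0 => nz Hpos
  end.

Ltac bigD h u Sh Su Hpos f y :=
  let H := fresh in
  eassert (H : is_derive f y _);
  [ auto_derive; [ side h u Sh Su Hpos | reflexivity ] | rewrite (is_derive_unique f y _ H); clear H ].
Ltac bigDh h u Sh Su Hpos f y Hy :=
  let H := fresh in
  eassert (H : is_derive f y _);
  [ auto_derive; [ side h u Sh Su Hpos | reflexivity ] | rewrite (is_derive_unique f y _ H) in Hy; clear H ].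

Lemma ptE f t x : pt f t x = Derive (fun s => f s x) t. Proof. reflexivity. Qed.
Lemma pxE f t x : px f t x = Derive (fun y => f t y) x. Proof. reflexivity. Qed.

Theorem mainTheorem4 (g chi : R) (h u : R -> R -> R) :
  0 < g -> 0 < chi ->
  smooth2 h -> smooth2 u ->
  (forall t x, 0 < h t x) ->
  (forall t x, pt h t x + px (fun t x => h t x * u t x) t x = 0) ->
  (forall t x,
     pt (fun t x => h t x * u t x) t x
     + px (fun t x => h t x * (u t x)^2 + g * (h t x)^2 / 2
                      - chi * mat u (mat u (fun t x => / h t x)) t x) t x = 0) ->
  forall t x,
    pt (fun t x =>
          h t x * ((u t x)^2 / 2 + g * h t x / 2
                   + chi * (mat u (fun t x => / h t x) t x)^2 / 2)) t x
    + px (fun t x =>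
          (h t x * u t x) * ((u t x)^2 / 2 + g * h t x / 2
                   + chi * (mat u (fun t x => / h t x) t x)^2 / 2)
          + (g * (h t x)^2 / 2 - chi * mat u (mat u (fun t x => / h t x)) t x)
            * u t x) t x = 0.
Proof.
intros Hg Hchi Sh Su Hpos Hmass Hmom.
assert (EA : mat u (fun t x => / h t x) = fun t x => px u t x / h t x).
{ apply functional_extensionality; intro t; apply functional_extensionality; intro x.
  clear Hmom. specialize (Hmass t x). unfold mat, pt, px in *.
  bigD h u Sh Su Hpos (fun s => / h s x) t.
  bigD h u Sh Su Hpos (fun y => / h t y) x.
  bigDh h u Sh Su Hpos (fun y => h t y * u t y) x Hmass.
  pose proof (Hpos t x).
  set (ht := Derive (fun s => h s x) t) in *. set (hx := Derive (fun y => h t y) x) in *.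
  set (ux := Derive (fun y => u t y) x) in *.
  replace ht with (-(hx * u t x + h t x * ux)) by lra. field. lra. }
rewrite EA in Hmom |- *.
assert (EB : mat u (fun t x => px u t x / h t x) = fun t x =>
   (pt (px u) t x * h t x - px u t x * pt h t x) / (h t x)^2
   + u t x * ((px (px u) t x * h t x - px u t x * px h t x) / (h t x)^2)).
{ apply functional_extensionality; intro t; apply functional_extensionality; intro x.
  clear Hmom Hmass EA.
  change (Derive (fun s => px u s x / h s x) t + u t x * Derive (fun y => px u t y / h t y) x = 
   (pt (px u) t x * h t x - px u t x * pt h t x) / (h t x)^2
   + u t x * ((px (px u) t x * h t x - px u t x * px h t x) / (h t x)^2)).
  bigD h u Sh Su Hpos (fun s => px u s x / h s x) t.
  bigD h u Sh Su Hpos (fun y => px u t y / h t y) x.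
  pose proof (Hpos t x). unfold pt, px. field. lra. }
rewrite EB in Hmom |- *. intros t x. specialize (Hmom t x). specialize (Hmass t x).
rewrite (pxE (fun t x => h t x * u t x)) in Hmass.
match type of Hmom with pt ?F _ _ + px ?G _ _ = 0 => rewrite (ptE F), (pxE G) in Hmom end.
match goal with |- pt ?F _ _ + px ?G _ _ = 0 => rewrite (ptE F), (pxE G) end.
bigDh h u Sh Su Hpos (fun y => h t y * u t y) x Hmass.
bigDh h u Sh Su Hpos (fun s => h s x * u s x) t Hmom.
match type of Hmom with _ + Derive ?g _ = 0 => bigDh h u Sh Su Hpos g x Hmom end.
match goal with |- Derive ?f _ + _ = 0 => bigD h u Sh Su Hpos f t end.
match goal with |- _ + Derive ?g _ = 0 => bigD h u Sh Su Hpos g x end.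
clear EA EB. unfold pt, px in *.
pose proof (Hpos t x) as Hp.
set (ux := Derive (fun y => u t y) x) in *.
match type of Hmass with ?M = 0 => match type of Hmom with ?E = 0 =>
  transitivity ((u t x ^ 2 / 2 + g * h t x / 2 + chi * (ux / h t x)^2/2) * M + u t x * E
     - u t x ^ 2 * M + g * h t x / 2 * M);
  [ field; lra | rewrite Hmass, Hmom; ring ] end end.
Qed.
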